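(* Let $n\ge2$ and let $g:\mathbb{R}\to(0,\infty)$ be a continuous, even, $2\pi/n$-periodic function that is nondecreasing on $[0,\pi/n]$, and let $D=\{re^{i\theta}:\theta\in[0,2\pi),\ 0\le r<g(\theta)\}$. For $\alpha\in\mathbb{R}$ let $S_\alpha$ denote the reflection across the line $\{re^{i\alpha}:r\in\mathbb{R}\}$, i.e. $S_\alpha(re^{i\theta})=re^{i(2\alpha-\theta)}$, and for $\alpha<\beta$ let $\sigma(\alpha,\beta)=\{re^{i\theta}: r>0,\ \alpha<\theta<\beta\}$. Then for every $t\in(0,\pi/n)$, $$S_{\frac{\pi}{n}+t}\Big(D\cap\sigma\big(\tfrac{\pi}{n}+t,\tfrac{2\pi}{n}+t\big)\Big)\subseteq D\cap\sigma\big(t,\tfrac{\pi}{n}+t\big).$$ Moreover, if $D$ is not a disk, then $$S_{\frac{\pi}{n}+t}\Big(\partial D\cap\sigma\big(\tfrac{\pi}{n}+t,\tfrac{2\pi}{n}+t\big)\Big)\cap D\neq\emptyset.$$ *)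

(* Defs.v *)
From HB Require Import structures.
From mathcomp Require Import all_boot all_order all_algebra.
From mathcomp Require Import all_classical all_reals all_analysis.
Set Implicit Arguments. Unset Strict Implicit. Unset Printing Implicit Defensive.
Import Order.TTheory GRing.Theory Num.Theory.
Import numFieldNormedType.Exports.
Local Open Scope classical_set_scope.
Local Open Scope ring_scope.

Definition polar (R : realType) (r th : R) : R * R := (r * cos th, r * sin th).

Definition starD (R : realType) (g : R -> R) : set (R * R) :=
  [set p | exists r th, [/\ 0 <= th < 2 * pi, 0 <= r < g th & p = polar r th]].

Definition sector (R : realType) (a b : R) : set (R * R) :=
  [set p | exists r th, [/\ 0 < r, a < th < b & p = polar r th]].

(* reflection across the line { r e^{i a} : r in R }:
   S_a(r e^{i theta}) = r e^{i (2a - theta)} *)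
Definition refl (R : realType) (a : R) (p : R * R) : R * R :=
  (cos (2 * a) * p.1 + sin (2 * a) * p.2, sin (2 * a) * p.1 - cos (2 * a) * p.2).

Definition bdry (R : realType) (A : set (R * R)) : set (R * R) :=
  closure A `\` interior A.

Definition disk (R : realType) (c : R * R) (rho : R) : set (R * R) :=
  [set p | (p.1 - c.1) ^+ 2 + (p.2 - c.2) ^+ 2 < rho ^+ 2].

(* Main.v *)
Require Import Defs.
From HB Require Import structures.
From mathcomp Require Import all_boot all_order all_algebra.
From mathcomp Require Import all_classical all_reals all_analysis.
From mathcomp Require Import ring lra.
Import Order.TTheory GRing.Theory Num.Theory.
Import numFieldNormedType.Exports.
Local Open Scope classical_set_scope.
Local Open Scope ring_scope.

Lemma polar_refl {R : realType} (a r th : R) :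
  refl a (polar r th) = polar r (2 * a - th).
Proof.
rewrite /refl /polar /= cosB sinB; congr pair; ring.
Qed.

Lemma polar_sq {R : realType} (r th : R) :
  (polar r th).1 ^+ 2 + (polar r th).2 ^+ 2 = r ^+ 2.
Proof.
rewrite /polar /= !exprMn -mulrDr cos2Dsin2 mulr1 //.
Qed.

Lemma cos_eq1_0 {R : realType} (x : R) :
  - (2 * pi) < x < 2 * pi -> cos x = 1 -> x = 0.
Proof.
move=> /andP[h1 h2] hc.
have e : cos x = 1 - 2 * sin (x / 2) ^+ 2.
  have -> : x = x / 2 + x / 2 by field.
  rewrite cosD; have := cos2Dsin2 ((x/2 + x/2)/2).
  have -> : (x / 2 + x / 2) / 2 = x / 2 by field.
  move=> h; rewrite -!expr2; lra.
have s0 : sin (x / 2) = 0.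
  have : sin (x / 2) ^+ 2 = 0 by lra.
  by move/eqP; rewrite expf_eq0 /= => /eqP.
have hp := pi_gt0 R.
case: (ltrgt0P (x / 2)) => hx.
- have : 0 < sin (x / 2) by apply: sin_gt0_pi; apply/andP; split => //; lra.
  by rewrite s0 ltxx.
- have : 0 < sin (- (x / 2)) by apply: sin_gt0_pi; apply/andP; split; lra.
  by rewrite sinN s0 oppr0 ltxx.
- lra.
Qed.


Lemma polar_inj {R : realType} {r r' th th' : R} :
  0 < r -> 0 <= r' -> 0 <= th < 2 * pi -> 0 <= th' < 2 * pi ->
  polar r th = polar r' th' -> r = r' /\ th = th'.
Proof.
move=> hr hr' /andP[t1 t2] /andP[t1' t2'] E.
have rr : r = r'.
  have := polar_sq r th; rewrite E polar_sq => /eqP.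
  by rewrite eqrXn2 // ?(ltW hr) // => /eqP.
subst r'.
move: E; rewrite /polar => -[c s].
have c' : cos th = cos th' by apply: (mulfI (lt0r_neq0 hr)).
have s' : sin th = sin th' by apply: (mulfI (lt0r_neq0 hr)).
split => //.
have : th - th' = 0.
  apply: cos_eq1_0; first by apply/andP; split; lra.
  by rewrite cosB -c' -s' -!expr2 cos2Dsin2.
lra.
Qed.


Lemma gsym {R : realType} {g : R -> R} {h : R}
  (gper : forall x, g (x + 2 * h) = g x) (geven : forall x, g (- x) = g x) x :
  g (2 * h - x) = g x.
Proof. by rewrite addrC gper geven. Qed.

Lemma gperB {R : realType} {g : R -> R} {h : R}
  (gper : forall x, g (x + 2 * h) = g x) x : g (x - 2 * h) = g x.
Proof. by rewrite -[in RHS](subrK (2 * h) x) gper. Qed.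

Lemma key_ineq {R : realType} (g : R -> R) h t
  (gper : forall x, g (x + 2 * h) = g x) (geven : forall x, g (- x) = g x)
  (gmono : forall x y, 0 <= x -> x <= y -> y <= h -> g x <= g y)
  (ht0 : 0 < t) (ht1 : t < h) th :
  h + t < th < 2 * h + t -> g th <= g (2 * (h + t) - th).
Proof.
move=> /andP[a1 a2].
have gs := gsym gper geven.
case: (lerP th (2 * h)) => hth.
- rewrite -(gs th).
  case: (lerP (2 * (h + t) - th) h) => hp.
    by apply: gmono; lra.
  rewrite -(gs (2 * (h + t) - th)); apply: gmono; lra.
- rewrite -(gperB gper th).
  case: (lerP (2 * (h + t) - th) h) => hp.
    by apply: gmono; lra.
  rewrite -(gs (2 * (h + t) - th)); apply: gmono; lra.
Qed.


Lemma exists_theta {R : realType} (g : R -> R) h t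
  (gper : forall x, g (x + 2 * h) = g x) (geven : forall x, g (- x) = g x)
  (gmono : forall x y, 0 <= x -> x <= y -> y <= h -> g x <= g y)
  (gcont : continuous g)
  (ht0 : 0 < t) (ht1 : t < h) (hlt : g 0 < g h) :
  exists th, h + t < th < 2 * h + t /\ g th < g (2 * (h + t) - th).
Proof.
have gs := gsym gper geven.
pose E := [set x : R | 0 <= x <= h /\ g x = g 0].
have E0 : E 0 by split => //; apply/andP; split; lra.
have hsE : has_sup E.
  split; first by exists 0.
  by exists h => x [/andP[_ ?] _].
pose c := sup E.
have c0 : 0 <= c by apply: sup_upper_bound.
have ch : c <= h by apply: ge_sup; [exists 0 | move=> x [/andP[_ ?] _]].
have above : forall x, c < x -> x <= h -> g 0 < g x.
  move=> x cx xh; have : g 0 <= g x by apply: gmono; lra.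
  rewrite le_eqVlt => /orP[/eqP e|//].
  have : x <= c by apply: sup_upper_bound => //; split; [apply/andP; split; lra|done].
  lra.
have gc : g c = g 0.
  apply/eqP; rewrite eq_le; apply/andP; split; last by apply: gmono; lra.
  rewrite leNgt; apply/negP => lt0.
  have := @cvgr_gt R R (nbhs c) (nbhs_filter c) g (g c) (gcont c) (g 0) lt0.
  move=> HH; have [e e0 sub] := (iffLR (nbhs_ballP _ _) HH).
  have [y Ey ye] := sup_adherent e0 hsE.
  have yc : y <= c by apply: sup_upper_bound.
  have : g 0 < g y.
    apply: sub; rewrite -ball_normE /= ger0_norm; rewrite -/c in ye; lra.
  by case: Ey => _ ->; rewrite ltxx.
have chl : c < h.
  rewrite lt_neqAle ch andbT; apply/negP => /eqP ech.
  by move: hlt; rewrite -ech gc ltxx.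
case: (ltrP c (h - t)) => cA.
  exists (2 * h - c); split; first by apply/andP; split; lra.
  rewrite gs gc.
  case: (lerP (2 * (h + t) - (2 * h - c)) h) => hp.
    by apply: above; lra.
  rewrite -(gs (2 * (h + t) - (2 * h - c))); apply: above; lra.
case: (ltrP c t) => cB.
  exists (2 * h + c); split; first by apply/andP; split; lra.
  rewrite [X in g X < _]addrC gper gc.
  case: (lerP (2 * (h + t) - (2 * h + c)) h) => hp.
    by apply: above; lra.
  rewrite -(gs (2 * (h + t) - (2 * h + c))); apply: above; lra.
exists (h + 2 * t); split; first by apply/andP; split; lra.
have -> : 2 * (h + t) - (h + 2 * t) = h by ring.
apply: (le_lt_trans _ hlt); rewrite -gc.
case: (lerP (2 * t) h) => h2.
  rewrite -(gs (h + 2 * t)); apply: gmono; lra.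
rewrite -(gperB gper (h + 2 * t)); apply: gmono; lra.
Qed.


Lemma gconst {R : realType} (g : R -> R) h (hp : 0 < h)
  (gper : forall x, g (x + 2 * h) = g x) (geven : forall x, g (- x) = g x)
  (gmono : forall x y, 0 <= x -> x <= y -> y <= h -> g x <= g y)
  (heq : g 0 = g h) x : 0 <= x -> g x = g 0.
Proof.
move=> x0.
have inI : forall y, 0 <= y <= h -> g y = g 0.
  move=> y /andP[y0 yh]; apply/eqP; rewrite eq_le; apply/andP; split.
    by rewrite heq; apply: gmono.
  by apply: gmono.
have pern : forall (k : nat) y, g (y + k%:R * (2 * h)) = g y.
  elim=> [|k IH] y; first by rewrite mul0r addr0.
  by rewrite -addn1 natrD mulrDl mul1r addrA gper IH.
have h2 : 0 < 2 * h by lra.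
pose k := Num.trunc (x / (2 * h)).
have /andP[k1 k2] : k%:R <= x / (2 * h) < k.+1%:R.
  by apply: truncn_itv; apply: divr_ge0 => //; lra.
have k1' : k%:R * (2 * h) <= x by rewrite -ler_pdivlMr.
have k2' : x < k.+1%:R * (2 * h) by rewrite -ltr_pdivrMr.
move: k2'; rewrite -addn1 natrD mulrDl mul1r => k2'.
have -> : x = (x - k%:R * (2 * h)) + k%:R * (2 * h) by ring.
rewrite pern.
case: (lerP (x - k%:R * (2 * h)) h) => hy.
  by apply: inI; apply/andP; split; lra.
rewrite -(gsym gper geven (x - k%:R * (2 * h))).
by apply: inI; apply/andP; split; lra.
Qed.


Lemma disk_eq {R : realType} (g : R -> R) (g0pos : 0 < g 0)
  (gc : forall x, 0 <= x -> g x = g 0) : starD g = disk (0, 0) (g 0).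
Proof.
have hpi := pi_gt0 R.
apply/seteqP; split.
  move=> p [r [th [/andP[th0 _] /andP[r0 rg] ->]]].
  rewrite /disk /= !subr0 polar_sq; move: rg; rewrite (gc th th0) => rg.
  nra.
move=> [x y]; rewrite /disk /= !subr0 => hxy.
pose s := x ^+ 2 + y ^+ 2.
have s0 : 0 <= s by rewrite /s; nra.
have [se0|sn0] := eqVneq s 0.
  have x0 : x = 0 by move: se0; rewrite /s; nra.
  have y0 : y = 0 by move: se0; rewrite /s; nra.
  exists 0, 0; split; [by apply/andP; split; lra | by apply/andP; split; lra |].
  by rewrite /polar !mul0r x0 y0.
pose r := Num.sqrt s.
have sp : 0 < s by rewrite lt_neqAle eq_sym sn0 s0.
have rp : 0 < r by rewrite /r sqrtr_gt0.
have r2 : r ^+ 2 = s by rewrite /r sqr_sqrtr.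
have rg : r < g 0 by move: hxy; rewrite -/s -r2; nra.
pose u := x / r.
have u2 : u ^+ 2 <= 1.
  rewrite /u expr_div_n r2 ler_pdivrMr // mul1r /s; nra.
have um : u \in `[-1, 1].
  by rewrite in_itv /=; apply/andP; split; nra.
pose th0 := acos u.
have um' : -1 <= u <= 1 by move: um; rewrite in_itv.
have ct : cos th0 = u by rewrite /th0 acosK.
have st : sin th0 = `|y| / r.
  rewrite /th0 sin_acos //.
  have -> : 1 - u ^+ 2 = (y / r) ^+ 2.
    rewrite /u !expr_div_n r2 /s; field; exact: sn0.
  by rewrite sqrtr_sqr normrM normfV (gtr0_norm rp).
have a0 : 0 <= th0 by apply: acos_ge0.
have api : th0 <= pi by apply: acos_lepi.
have ex : r * u = x by rewrite /u; field; lra.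
case: (lerP 0 y) => y0.
  exists r, th0; split.
  - by apply/andP; split; lra.
  - by rewrite (gc _ a0); apply/andP; split; lra.
  - rewrite /polar ct st ex (ger0_norm y0); congr pair; field; lra.
have th0p : 0 < th0.
  rewrite lt_neqAle a0 andbT; apply/negP => /eqP e.
  move: st; rewrite -e sin0 => /esym /eqP.
  rewrite mulf_eq0 invr_eq0 normr_eq0; lra.
have e2 : 2 * (pi : R) = pi *+ 2 by rewrite mulr2n; ring.
exists r, (2 * pi - th0); split.
- by apply/andP; split; lra.
- by rewrite gc; [apply/andP; split; lra | lra].
  rewrite /polar cosB sinB e2 cos2pi sin2pi ct st (ltr0_norm y0) -ex.
  congr pair; [ring | rewrite /u; field; lra].
Qed.


Lemma bdry_pt {R : realType} (g : R -> R) th :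
  0 <= th < 2 * pi -> 0 < g th -> bdry (starD g) (polar (g th) th).
Proof.
move=> hth gp; split.
  move=> B /nbhs_ballP [e /= e0 sub].
  pose d := Num.min (e / 2) (g th / 2).
  have d0 : 0 < d by rewrite /d lt_min; apply/andP; split; lra.
  have de : d < e by rewrite /d gt_min; apply/orP; left; lra.
  have dg : d < g th by rewrite /d gt_min; apply/orP; right; lra.
  exists (polar (g th - d) th); split.
    exists (g th - d), th; split => //; apply/andP; split; lra.
  apply: sub; rewrite /ball /= /prod_ball /polar /=; split; rewrite -ball_normE /=.
  - have -> : g th * cos th - (g th - d) * cos th = d * cos th by ring.
    rewrite normrM (gtr0_norm d0); have := cos_max th; nra.
  - have -> : g th * sin th - (g th - d) * sin th = d * sin th by ring.
    rewrite normrM (gtr0_norm d0); have := sin_max th; nra.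
move=> /interior_subset [r [th' [hth' /andP[r0 rl] E]]].
have [er et] := polar_inj gp r0 hth hth' E.
by move: rl; rewrite -er -et ltxx.
Qed.


Theorem lemma2 (R : realType) (n : nat) (g : R -> R)
  (hn : (2 <= n)%N)
  (gpos : forall x, 0 < g x)
  (gcont : continuous g)
  (geven : forall x, g (- x) = g x)
  (gper : forall x, g (x + 2 * pi / n%:R) = g x)
  (gmono : forall x y, 0 <= x -> x <= y -> y <= pi / n%:R -> g x <= g y)
  (t : R) (ht0 : 0 < t) (ht1 : t < pi / n%:R) :
  refl (pi / n%:R + t) @`
      (starD g `&` sector (pi / n%:R + t) (2 * pi / n%:R + t))
    `<=` starD g `&` sector t (pi / n%:R + t)
  /\
  ((~ exists (c : R * R) (rho : R), 0 < rho /\ starD g = disk c rho) ->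
   refl (pi / n%:R + t) @`
      (bdry (starD g) `&` sector (pi / n%:R + t) (2 * pi / n%:R + t))
    `&` starD g !=set0).
Proof.
have e2 : 2 * pi / n%:R = 2 * (pi / n%:R) :> R by rewrite mulrA.
rewrite e2; move: gper; rewrite e2 => gper.
have hpi := pi_gt0 R.
have n2 : (2 : R) <= n%:R by rewrite (ler_nat R 2 n).
have n0 : (0 : R) < n%:R by lra.
have hn' : pi / n%:R * n%:R = pi :> R by rewrite divfK // gt_eqF.
set h := pi / n%:R in hn' gper gmono ht1 *.
have hp : 0 < h by rewrite /h divr_gt0.
have h2pi : 2 * h <= pi by nra.
split.
  move=> q [p [Dp Sp] <-].
  case: Sp => r [th [hr hth pE]].
  case: Dp => r' [th' [hth' /andP[r'0 r'g] E]].
  have hth2 : 0 <= th < 2 * pi by move: hth => /andP[? ?]; apply/andP; split; lra.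
  rewrite pE in E; rewrite pE.
  have [er et] := polar_inj hr r'0 hth2 hth' E.
  subst r' th'.
  have kk := key_ineq _ _ _ gper geven gmono ht0 ht1 _ hth.
  move: hth => /andP[a1 a2].
  rewrite polar_refl; split.
    exists r, (2 * (h + t) - th); split.
    - by apply/andP; split; lra.
    - by apply/andP; split; lra.
    - by [].
  exists r, (2 * (h + t) - th); split => //; apply/andP; split; lra.
move=> nd.
have g0h : g 0 < g h.
  have : g 0 <= g h by apply: gmono; lra.
  rewrite le_eqVlt => /orP[/eqP e|//].
  exfalso; apply: nd; exists (0, 0), (g 0); split => //.
  apply: disk_eq => // x x0.
  exact: (gconst _ _ hp gper geven gmono e).
have [th [hth hlt]] := exists_theta _ _ _ gper geven gmono gcont ht0 ht1 g0h.
move: (hth) => /andP[a1 a2].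
exists (polar (g th) (2 * (h + t) - th)); split.
  exists (polar (g th) th); last by rewrite polar_refl.
  split.
    by apply: bdry_pt => //; apply/andP; split; lra.
  by exists (g th), th; split.
exists (g th), (2 * (h + t) - th); split => //.
- by apply/andP; split; lra.
- by apply/andP; split; [exact: ltW | exact: hlt].
Qed.
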